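(* Fix $m\in\{1,\dots,M\}$, let $n=N_r-M+1$, let $R_{m,1},\dots,R_{m,K}>0$ and let $\phi_{m,1},\dots,\phi_{m,K}>0$ be the constants defined in the context. Let $\zeta_{m,k}^*$ and $\theta_{m,k}^*$ be the optimal solution of \[ \min\ \sum_{m=1}^M\sum_{k=1}^K \phi_{m,k}R_{m,k}\,\theta_{m,k}^{-n} \] subject to $\sum_{k=1}^K\zeta_{m,k}=\frac1M$ for all $m$; $\zeta_{m,k}>0$, $\theta_{m,k}>0$; and $\theta_{m,k}\le \frac{\zeta_{m,i}}{2^{R_{m,i}}-1}-\sum_{l=1}^{i-1}\zeta_{m,l}$ for all $m$, $k$ and $i\in\{k,\dots,K\}$. Then $\theta_{m,1}^*<\theta_{m,2}^*<\dots<\theta_{m,K}^*$, and consequently \[ \frac{\zeta_{m,1}^*}{2^{R_{m,1}}-1}<\frac{\zeta_{m,2}^*}{2^{R_{m,2}}-1}<\dots<\frac{\zeta_{m,K}^*}{2^{R_{m,K}}-1}. \]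
   Context: Setting: a base station with $N_t$ antennas serves $K$ clusters, each of $N_r$ single-antenna devices, each requesting $M\le\min(N_t,N_r)$ streams. $\mathbf R_t$, $\mathbf R_r$ are Hermitian positive definite correlation matrices, $\lambda_1,\dots,\lambda_{N_r}$ the eigenvalues of $\mathbf R_r$; $\mathbf V\in\mathbb C^{N_t\times M}$ with unit-norm columns, $\mathbf R_{t'}=\mathbf V^{\mathrm H}\mathbf R_t\mathbf V$ (invertible); $\bar\gamma>0$; path loss $\mathcal K d_k^{-\alpha}$ with $d_1\le\dots\le d_K$. With $W=(\lambda_i^{N_r-j})_{i,j}$ and $D$ equal to $W$ with first column replaced by $(\lambda_i^{M-2}\ln\lambda_i)_i$, $\phi_{m,k}=\frac{1}{N_r!\det\mathbf R_r}\big(\frac{[\mathbf R_{t'}^{-1}]_{mm}}{\bar\gamma\mathcal K d_k^{-\alpha}}\big)^{N_r}$ if $M=1$, and $\phi_{m,k}=\frac{(-1)^{N_r-M}(N_r-1)!\det D}{(N_r-M)!(N_r-M+1)!(M-2)!\det W}\big(\frac{[\mathbf R_{t'}^{-1}]_{mm}}{\bar\gamma\mathcal K d_k^{-\alpha}}\big)^{N_r-M+1}$ if $M>1$. (The optimal solution is given explicitly by $\boldsymbol\zeta_m^*=\mathbf L_m^{-1}\mathbf b_m/(M\mathbf 1_K^{\mathrm T}\mathbf L_m^{-1}\mathbf b_m)$, with $\mathbf L_m^{\mathrm T}=\mathbf U_m$ upper triangular, diagonal $1/(2^{R_{m,k}}-1)$, entries $-1$ above the diagonal, and $[\mathbf b_m]_k=\big(n\phi_{m,k}R_{m,k}/(\mathbf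 e_k^{\mathrm T}\mathbf U_m^{-1}\mathbf 1_K)\big)^{1/(n+1)}$.) *)

(* Defs.v *)
From HB Require Import structures.
From mathcomp Require Import all_boot all_order all_algebra.
From mathcomp Require Import all_classical all_reals all_analysis.
Set Implicit Arguments. Unset Strict Implicit. Unset Printing Implicit Defensive.
Import Order.TTheory GRing.Theory Num.Theory.
Local Open Scope ring_scope.

Section Defs.
Variable R : realType.

(* W = (lambda_i^(Nr - j))_{i,j}, j 1-indexed; here j is 0-indexed. *)
Definition matW (Nr : nat) (lam : 'I_Nr -> R) : 'M[R]_Nr :=
  \matrix_(i < Nr, j < Nr) lam i ^+ (Nr - 1 - j).

Definition matD (Nr M : nat) (lam : 'I_Nr -> R) : 'M[R]_Nr :=
  \matrix_(i < Nr, j < Nr)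
    if (j : nat) == 0%N then lam i ^+ (M - 2) * ln (lam i)
    else lam i ^+ (Nr - 1 - j).

(* phi_{m,k}.  lam = eigenvalues of R_r (so det R_r = prod lam),
   q = [R_{t'}^{-1}]_{mm}, gam = gamma bar, Kc = path-loss constant K,
   alpha = path-loss exponent, dk = distance d_k. *)
Definition phi (Nr M : nat) (lam : 'I_Nr -> R) (q gam Kc alpha dk : R) : R :=
  let base := q / (gam * Kc * dk `^ (- alpha)) in
  if M == 1%N then
    (Nr`!%:R * \prod_(i < Nr) lam i)^-1 * base ^+ Nr
  else
    ((-1) ^+ (Nr - M) * (Nr.-1)`!%:R * \det (matD M lam)) /
    ((Nr - M)`!%:R * (Nr - M + 1)`!%:R * (M - 2)`!%:R * \det (matW lam))
    * base ^+ (Nr - M + 1).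

Definition objective (M K n : nat) (ph Rt : 'I_M -> 'I_K -> R)
  (theta : 'I_M -> 'I_K -> R) : R :=
  \sum_(m < M) \sum_(k < K) ph m k * Rt m k * (theta m k) ^- n.

Definition feasible (M K : nat) (Rt : 'I_M -> 'I_K -> R)
  (zeta theta : 'I_M -> 'I_K -> R) : Prop :=
  (forall m : 'I_M, \sum_(k < K) zeta m k = M%:R^-1) /\
  (forall m k, 0 < zeta m k) /\ (forall m k, 0 < theta m k) /\
  (forall m (k i : 'I_K), (k <= i)%N ->
     theta m k <= zeta m i / (2 `^ (Rt m i) - 1)
                  - \sum_(l < K | (l < i)%N) zeta m l).

Definition optimal (M K n : nat) (ph Rt : 'I_M -> 'I_K -> R)
  (zeta theta : 'I_M -> 'I_K -> R) : Prop :=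
  feasible Rt zeta theta /\
  forall zeta' theta', feasible Rt zeta' theta' ->
    objective n ph Rt theta <= objective n ph Rt theta'.

End Defs.

(* Main.v *)
Require Import Defs.
From HB Require Import structures.
From mathcomp Require Import all_boot all_order all_algebra.
From mathcomp Require Import all_classical all_reals all_analysis.
From mathcomp Require Import ring lra zify.
Import Order.TTheory GRing.Theory Num.Theory.
Local Open Scope ring_scope.

Definition cc {R : realType} {K : nat} (a z : 'I_K -> R) (i : 'I_K) : R :=
  z i / a i - \sum_(l < K | (l < i)%N) z l.

Definition rowfeas {R : realType} {K : nat} (a : 'I_K -> R) (s : R)
  (z th : 'I_K -> R) : Prop :=
  \sum_(k < K) z k = s /\ (forall k, 0 < z k) /\ (forall k, 0 < th k) /\
  (forall (k i : 'I_K), (k <= i)%N -> th k <= cc a z i).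

Definition rowobj {R : realType} {K : nat} (n : nat) (w th : 'I_K -> R) : R :=
  \sum_(k < K) w k * th k ^- n.

Definition zm {R : realType} {K : nat} (z : 'I_K -> R) (p q : 'I_K) (e : R) :
  'I_K -> R :=
  fun l => z l + (if l == q then e else 0) - (if l == p then e else 0).

Lemma min2 {R : realType} (x y : R) : 0 < x -> 0 < y ->
  exists e, [/\ 0 < e, e <= x & e <= y].
Proof.
move=> hx hy; exists (Num.min x y); split.
- by rewrite lt_min hx hy.
- by rewrite ge_min lexx.
- by rewrite ge_min lexx orbT.
Qed.

Lemma gap_seq {R : realType} {T : eqType} (s : seq T) (g : T -> R) :
  (forall i, i \in s -> 0 < g i) ->
  exists e, 0 < e /\ forall i, i \in s -> e <= g i.
Proof.
elim: s => [|x s IH] H.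
  by exists 1; split => // i; rewrite in_nil.
have [e [e0 He]] : exists e, 0 < e /\ forall i, i \in s -> e <= g i.
  by apply: IH => i hi; apply: H; rewrite in_cons hi orbT.
have [e' [e'0 h1 h2]] := min2 _ _ e0 (H x (mem_head x s)).
exists e'; split => // i; rewrite in_cons => /orP [/eqP -> // | hi].
exact: le_trans h1 (He i hi).
Qed.

Lemma gap {R : realType} (K : nat) (P : pred 'I_K) (g : 'I_K -> R) :
  (forall i, P i -> 0 < g i) -> exists e, 0 < e /\ forall i, P i -> e <= g i.
Proof.
move=> H.
have H' : forall i, i \in [seq i <- enum 'I_K | P i] -> 0 < g i.
  by move=> i; rewrite mem_filter => /andP [/H].
have [e [e0 He]] := gap_seq _ _ H'.
by exists e; split => // i Pi; apply: He; rewrite mem_filter Pi mem_enum.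
Qed.

Lemma pow_diff_le {R : realType} (n : nat) (x y : R) : 0 <= y -> y <= x ->
  x ^+ n - y ^+ n <= (x - y) * (n%:R * x ^+ n.-1).
Proof.
move=> y0 yx; have x0 : 0 <= x := le_trans y0 yx.
rewrite subrXX; apply: ler_wpM2l; first by rewrite subr_ge0.
have -> : n%:R * x ^+ n.-1 = \sum_(i < n) x ^+ n.-1.
  by rewrite sumr_const card_ord mulr_natl.
apply: ler_sum => i _.
have hi : (i <= n.-1)%N by have := ltn_ord i; lia.
have -> : x ^+ n.-1 = x ^+ (n.-1 - i) * x ^+ i by rewrite -exprD subnK.
apply: ler_wpM2l; first exact: exprn_ge0.
by apply: lerXn2r; rewrite ?nnegrE.
Qed.

Lemma pow_diff_ge {R : realType} (n : nat) (x y : R) : 0 <= y -> y <= x ->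
  (x - y) * (n%:R * y ^+ n.-1) <= x ^+ n - y ^+ n.
Proof.
move=> y0 yx; have x0 : 0 <= x := le_trans y0 yx.
rewrite subrXX; apply: ler_wpM2l; first by rewrite subr_ge0.
have -> : n%:R * y ^+ n.-1 = \sum_(i < n) y ^+ n.-1.
  by rewrite sumr_const card_ord mulr_natl.
apply: ler_sum => i _.
have hi : (i <= n.-1)%N by have := ltn_ord i; lia.
have -> : y ^+ n.-1 = y ^+ (n.-1 - i) * y ^+ i by rewrite -exprD subnK.
apply: ler_wpM2r; first exact: exprn_ge0.
by apply: lerXn2r; rewrite ?nnegrE.
Qed.

Lemma sum_ind {R : realType} (K : nat) (P : pred 'I_K) (q : 'I_K) (e : R) :
  \sum_(l < K | P l) (if l == q then e else 0) = if P q then e else 0.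
Proof.
rewrite big_mkcond (bigD1 q) //= eqxx big1 ?addr0 //.
by move=> l /negbTE ->; case: (P l).
Qed.

Lemma sum_ind1 {R : realType} (K : nat) (q : 'I_K) (e : R) :
  \sum_(l < K) (if l == q then e else 0) = e.
Proof. by rewrite -big_mkcond big_pred1_eq. Qed.

Lemma zm_sum {R : realType} (K : nat) (z : 'I_K -> R) p q e :
  \sum_(l < K) zm z p q e l = \sum_(l < K) z l.
Proof. by rewrite /zm sumrB big_split /= !sum_ind1 addrK. Qed.

Lemma cc_zm {R : realType} (K : nat) (a z : 'I_K -> R) p q e i :
  cc a (zm z p q e) i = cc a z i + (if i == q then e / a i else 0)
     - (if i == p then e / a i else 0) - (if (q < i)%N then e else 0)
     + (if (p < i)%N then e else 0).
Proof.
rewrite /cc /zm sumrB big_split /= !(sum_ind _ (fun l : 'I_K => (l < i)%N)).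
by case: (i == q); case: (i == p); case: (q < i)%N; case: (p < i)%N;
  rewrite ?mul0r; ring.
Qed.


Lemma cc_zm_ge {R : realType} {K : nat} (a z : 'I_K -> R) (p q i : 'I_K) e :
  (forall k, 0 < a k) -> (p < q)%N -> 0 <= e -> i != p ->
  cc a z i <= cc a (zm z p q e) i.
Proof.
move=> Ha pq e0 ip; rewrite cc_zm (negbTE ip) /=.
have h1 : (if (q < i)%N then e else 0) <= (if (p < i)%N then e else 0).
  case: (ltnP q i) => h; [by rewrite (ltn_trans pq h) | by case: ifP].
have h2 : 0 <= (if i == q then e / a i else 0).
  by case: ifP => // _; rewrite divr_ge0 // ltW.
move: h1 h2; set A := (if (q < i)%N then _ else _); set B := (if (p < i)%N then _ else _).
set C := (if i == q then _ else _). move=> h1 h2. lra.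
Qed.

Lemma cc_zm_mid {R : realType} {K : nat} (a z : 'I_K -> R) (p q i : 'I_K) e :
  (forall k, 0 < a k) -> 0 <= e -> (p < i)%N -> (i <= q)%N ->
  cc a z i + e <= cc a (zm z p q e) i.
Proof.
move=> Ha e0 pi iq; have ip : (i == p) = false by rewrite -val_eqE /= gtn_eqF.
rewrite cc_zm ip pi ltnNge iq.
have h2 : 0 <= (if i == q then e / a i else 0).
  by case: ifP => // _; rewrite divr_ge0 // ltW.
move: h2; set C := (if i == q then _ else _) => h2 /=. lra.
Qed.

Lemma cc_zm_p {R : realType} {K : nat} (a z : 'I_K -> R) (p q : 'I_K) e :
  (p < q)%N -> cc a (zm z p q e) p = cc a z p - e / a p.
Proof.
move=> pq; have pq' : (p == q) = false by rewrite -val_eqE /= ltn_eqF.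
rewrite cc_zm eqxx ltnn pq' ltnNge (ltnW pq) /=; ring.
Qed.

Lemma cc_zm_q {R : realType} {K : nat} (a z : 'I_K -> R) (p q : 'I_K) e :
  (p < q)%N -> cc a (zm z p q e) q = cc a z q + e / a q + e.
Proof.
move=> pq; have pq' : (q == p) = false by rewrite -val_eqE /= gtn_eqF.
rewrite cc_zm eqxx ltnn pq' pq /=; ring.
Qed.

Lemma zm_pos {R : realType} {K : nat} (z : 'I_K -> R) (p q : 'I_K) e :
  (forall l, 0 < z l) -> 0 <= e -> e < z p -> forall l, 0 < zm z p q e l.
Proof.
move=> Hz e0 ep l; rewrite /zm; have := Hz l.
by case: (l == q); case: (eqVneq l p) => [->|_]; lra.
Qed.

Lemma trade {R : realType} (n : nat) (mu wp wq al be e0 : R) : (0 < n)%N ->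
  0 < mu -> 0 < wp -> 0 < wq -> 0 < al -> 0 < be -> wp * al < wq * be ->
  0 < e0 ->
  exists e, [/\ 0 < e, e <= e0, al * e < mu &
    wp * (mu - al * e) ^- n + wq * (mu + be * e) ^- n <
    wp * mu ^- n + wq * mu ^- n].
Proof.
move=> n0 mu0 wp0 wq0 al0 be0 hw e00.
set U := mu ^+ n.
set N := n%:R * mu ^+ n.-1.
set C := be * (n%:R * (2 * mu) ^+ n.-1).
have U0 : 0 < U by exact: exprn_gt0.
have nR : 0 < (n%:R : R) by rewrite ltr0n.
have N0 : 0 < N by rewrite mulr_gt0 // exprn_gt0.
have C0 : 0 < C by rewrite !mulr_gt0 // exprn_gt0 // mulr_gt0.
set S := wp * al * C + wq * be * al * N.
have S0 : 0 < S by rewrite /S; apply: addr_gt0; [exact: mulr_gt0 (mulr_gt0 wp0 al0) C0 | exact: mulr_gt0 (mulr_gt0 (mulr_gt0 wq0 be0) al0) N0].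
set E3 := (wq * be - wp * al) * U / (2 * S).
have hw' : 0 < wq * be - wp * al by rewrite subr_gt0.
have E30 : 0 < E3 by rewrite /E3 divr_gt0 // mulr_gt0.
have [e1 [e10 h11 h12]] := min2 _ _ e00 E30.
have m1 : 0 < mu / (2 * al) by rewrite divr_gt0 // mulr_gt0.
have [e2 [e20 h21 h22]] := min2 _ _ e10 m1.
have m2 : 0 < mu / be by rewrite divr_gt0.
have [e [ep h1 h2]] := min2 _ _ e20 m2.
have ee1 : e <= e1 := le_trans h1 h21.
have hale : al * e <= mu / 2.
  have : e <= mu / (2 * al) := le_trans h1 h22.
  rewrite ler_pdivlMr ?mulr_gt0 // => h.
  by rewrite ler_pdivlMr //; lra.
have hbe : be * e <= mu by move: h2; rewrite ler_pdivlMr // mulrC.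
have heS : e * S <= (wq * be - wp * al) * U / 2.
  have : e <= E3 := le_trans ee1 h12.
  rewrite /E3 ler_pdivlMr ?mulr_gt0 // => h.
  by rewrite ler_pdivlMr //; lra.
exists e; split => //; first exact: le_trans ee1 h11.
  lra.
set x := mu - al * e.
set y := mu + be * e.
have x0 : 0 < x by rewrite /x; have := mulr_gt0 al0 ep; lra.
have xmu : x <= mu by rewrite /x; have := mulr_gt0 al0 ep; lra.
have muy : mu <= y by rewrite /y; have := mulr_gt0 be0 ep; lra.
have y2 : y <= 2 * mu by rewrite /y; lra.
set X := x ^+ n.
set Y := y ^+ n.
have X0 : 0 < X by exact: exprn_gt0.
have Y0 : 0 < Y by apply: exprn_gt0; lra.
have D1 : U - X <= al * e * N.
  have := pow_diff_le n _ _ (ltW x0) xmu.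
  by rewrite /U /X /N; have -> : mu - x = al * e by rewrite /x; ring.
have G1 : be * e * N <= Y - U.
  have := pow_diff_ge n _ _ (ltW mu0) muy.
  by rewrite /U /Y /N; have -> : y - mu = be * e by rewrite /y; ring.
have Yub : Y - U <= e * C.
  have := pow_diff_le n _ _ (ltW mu0) muy.
  have : y ^+ n.-1 <= (2 * mu) ^+ n.-1.
    by apply: lerXn2r; rewrite ?nnegrE //; lra.
  have -> : y - mu = be * e by rewrite /y; ring.
  rewrite /C /Y /U => h h'; apply: (le_trans h').
  have -> : e * (be * (n%:R * (2 * mu) ^+ n.-1)) =
            be * e * (n%:R * (2 * mu) ^+ n.-1) by ring.
  apply: ler_wpM2l; first by rewrite mulr_ge0 // ltW.
  by apply: ler_wpM2l => //; rewrite ltW.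
have key : wp * al * Y < wq * be * X.
  have k1 : wp * al * Y <= wp * al * (U + e * C).
    by apply: ler_wpM2l; [rewrite mulr_ge0 // ltW | lra].
  have k2 : wq * be * (U - al * e * N) <= wq * be * X.
    by apply: ler_wpM2l; [rewrite mulr_ge0 // ltW | lra].
  have k3 : wp * al * (U + e * C) < wq * be * (U - al * e * N).
    rewrite -subr_gt0.
    have -> : wq * be * (U - al * e * N) - wp * al * (U + e * C)
       = (wq * be - wp * al) * U - e * S by rewrite /S; ring.
    have hP : 0 < (wq * be - wp * al) * U by rewrite mulr_gt0.
    move: heS hP; set P := (wq * be - wp * al) * U; set Q := e * S => ? ?.
    lra.
  lra.
have h1' : wq * X * (be * e * N) <= wq * X * (Y - U).
  by apply: ler_wpM2l; [rewrite mulr_ge0 // ltW | exact G1].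
have h2' : wp * Y * (U - X) <= wp * Y * (al * e * N).
  by apply: ler_wpM2l; [rewrite mulr_ge0 // ltW | exact D1].
have h3' : wp * Y * (al * e * N) < wq * X * (be * e * N).
  have -> : wp * Y * (al * e * N) = (e * N) * (wp * al * Y) by ring.
  have -> : wq * X * (be * e * N) = (e * N) * (wq * be * X) by ring.
  by rewrite ltr_pM2l // mulr_gt0.
have num : 0 < wq * X * (Y - U) - wp * Y * (U - X).
  move: h1' h2' h3'.
  set A1 := wq * X * (be * e * N); set A2 := wq * X * (Y - U).
  set B1 := wp * Y * (U - X); set B2 := wp * Y * (al * e * N).
  move=> ? ? ?; lra.
rewrite -subr_gt0.
have -> : wp / U + wq / U - (wp / X + wq / Y) =
   (wq * X * (Y - U) - wp * Y * (U - X)) / (X * Y * U).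
  by field; rewrite ?(gt_eqF X0) ?(gt_eqF Y0) ?(gt_eqF U0).
by rewrite divr_gt0 // !mulr_gt0.
Qed.


Lemma pow2E {R : realType} (t : R) : 2 `^ t = expR (t * ln 2).
Proof. by rewrite /powR pnatr_eq0. Qed.

Lemma ratio_lt {R : realType} (x y : R) : 0 < x -> 0 < y ->
  x / (2 `^ x - 1) < y * (1 + (2 `^ y - 1)^-1).
Proof.
move=> x0 y0; rewrite !pow2E.
set L := ln (2 : R).
have L0 : 0 < L by rewrite /L ln_gt0 // ltr1n.
set X := x * L; set Y := y * L.
have X0 : 0 < X by rewrite mulr_gt0.
have Y0 : 0 < Y by rewrite mulr_gt0.
have hX : X < expR X - 1.
  by have := expR_gt1Dx (lt0r_neq0 X0); lra.
have EY0 : 0 < expR Y := expR_gt0 Y.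
have hY : expR Y - 1 < Y * expR Y.
  have := expR_gt1Dx (x := - Y); rewrite oppr_eq0 (lt0r_neq0 Y0) expRN => /(_ isT) h.
  have : (1 - Y) * expR Y < (expR Y)^-1 * expR Y by rewrite ltr_pM2r.
  rewrite mulVf ?(lt0r_neq0 EY0) //; lra.
have D0 : 0 < expR X - 1 by lra.
have F0 : 0 < expR Y - 1 by have := expR_gt1Dx (lt0r_neq0 Y0); lra.
apply: (@lt_trans _ _ L^-1).
  rewrite ltr_pdivrMr // -(ltr_pM2l L0) mulrA divff ?(lt0r_neq0 L0) // mul1r.
  by rewrite mulrC.
have -> : y * (1 + (expR Y - 1)^-1) = (Y * expR Y / (expR Y - 1)) / L.
  by rewrite /Y; field; rewrite ?(gt_eqF L0) ?(gt_eqF F0).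
rewrite ltr_pdivlMr // mulVf ?(lt0r_neq0 L0) //.
by rewrite ltr_pdivlMr // mul1r.
Qed.

Lemma phi_mono {R : realType} (Nr M : nat) (lam : 'I_Nr -> R) (qq gam Kc alpha d1 d2 : R) :
  0 < qq -> 0 < gam -> 0 < Kc -> 0 <= alpha -> 0 < d1 -> d1 <= d2 ->
  0 < phi M lam qq gam Kc alpha d1 ->
  phi M lam qq gam Kc alpha d1 <= phi M lam qq gam Kc alpha d2.
Proof.
move=> q0 g0 K0 a0 d10 d12.
have base_eq : forall d, qq / (gam * Kc * d `^ (- alpha)) = qq / (gam * Kc) * d `^ alpha.
  by move=> d; rewrite powRN invfM invrK mulrA.
have d20 : 0 < d2 := lt_le_trans d10 d12.
have hb1 : 0 < qq / (gam * Kc) * d1 `^ alpha by apply: mulr_gt0; [apply: divr_gt0 => //; exact: mulr_gt0 | exact: powR_gt0].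
have hb12 : qq / (gam * Kc) * d1 `^ alpha <= qq / (gam * Kc) * d2 `^ alpha.
  rewrite ler_pM2l; last by apply: divr_gt0 => //; exact: mulr_gt0.
  by apply: (ge0_ler_powR a0) => //; rewrite nnegrE ltW.
have gen : forall (C B1 B2 : R) (N : nat), 0 < B1 -> B1 <= B2 ->
    0 < C * B1 ^+ N -> C * B1 ^+ N <= C * B2 ^+ N.
  move=> C B1 B2 N b1 b12 h.
  have C0 : 0 < C by move: h; rewrite pmulr_lgt0 // exprn_gt0.
  rewrite ler_pM2l //; apply: lerXn2r => //; rewrite nnegrE.
    exact: ltW.
  exact: ltW (lt_le_trans b1 b12).
have hb1' : 0 < qq / (gam * Kc * d1 `^ (- alpha)) by rewrite base_eq.
have hb12' : qq / (gam * Kc * d1 `^ (- alpha)) <= qq / (gam * Kc * d2 `^ (- alpha)).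
  by rewrite !base_eq.
rewrite /phi; cbv zeta.
by case: ifP => _; apply: gen.
Qed.


Lemma row_main {R : realType} {K : nat} (n : nat) (a w : 'I_K -> R) (s : R)
  (z th : 'I_K -> R) :
  (0 < n)%N -> (forall k, 0 < a k) -> (forall k, 0 < w k) ->
  (forall p q : 'I_K, (p < q)%N -> w p / a p < w q * (1 + (a q)^-1)) ->
  rowfeas a s z th ->
  (forall z' th', rowfeas a s z' th' -> rowobj n w th <= rowobj n w th') ->
  forall k1 k2 : 'I_K, (k1 < k2)%N ->
    th k1 < th k2 /\ z k1 / a k1 < z k2 / a k2.
Proof.
move=> n0 Ha Hw Hwq Hf Hopt.
case: (Hf) => [Hs [Hz [Hth Hc]]].
have contra : forall z' th', rowfeas a s z' th' ->
    rowobj n w th' < rowobj n w th -> False.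
  by move=> z' th' /Hopt h hlt; move: (lt_le_trans hlt h); rewrite ltxx.
have term_lt : forall x y, 0 < x -> x < y -> forall k,
    w k * y ^- n < w k * x ^- n.
  move=> x y x0 xy k; rewrite ltr_pM2l // ltf_pV2 ?posrE ?exprn_gt0 //;
    last exact: lt_trans x0 xy.
  by rewrite ltrXn2r ?ltW // -lt0n.
have term_le : forall x y, 0 < x -> x <= y -> forall k,
    w k * y ^- n <= w k * x ^- n.
  move=> x y x0 xy k; rewrite ler_pM2l // lef_pV2 ?posrE ?exprn_gt0 //;
    last exact: lt_le_trans x0 xy.
  apply: lerXn2r => //; rewrite nnegrE ltW //; exact: lt_le_trans x0 xy.
have mono_obj : forall th' : 'I_K -> R, (forall k, th k <= th' k) ->
    forall k0, th k0 < th' k0 -> rowobj n w th' < rowobj n w th.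
  move=> th' hle k0 hlt; rewrite /rowobj (bigD1 k0) //= [X in _ < X](bigD1 k0) //=.
  apply: ltr_leD; first exact: term_lt.
  by apply: ler_sum => k _; apply: term_le.
have P0 : forall l : 'I_K, exists i : 'I_K, (l <= i)%N /\ th l = cc a z i.
  move=> l.
  case: (boolP [exists i : 'I_K, (l <= i)%N && (th l == cc a z i)]).
    by move=> /existsP [i /andP [li /eqP e]]; exists i.
  move=> /existsPn H; exfalso.
  have Hlt : forall i : 'I_K, (l <= i)%N -> 0 < cc a z i - th l.
    move=> i li; rewrite subr_gt0 lt_neqAle Hc // andbT.
    by move: (H i); rewrite li.
  have [e [e0 He]] := gap _ (fun i : 'I_K => (l <= i)%N) _ Hlt.
  pose th' := fun l' => if l' == l then th l + e else th l'.
  apply: (contra z th').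
    split; first done; split; first done; split.
      by move=> k; rewrite /th'; case: eqP => _; [apply: addr_gt0 | ].
    move=> k i ki; rewrite /th'; case: eqP => [kl | _]; last exact: Hc.
    by move: ki; rewrite kl => ki; rewrite -lerBrDl; exact: He.
  apply: (mono_obj th' _ l).
    by move=> k; rewrite /th'; case: eqP => [->|_] //; rewrite lerDl ltW.
  by rewrite /th' eqxx ltrDl.
have P1 : forall k j : 'I_K, (k < j)%N -> cc a z k <= cc a z j.
  move=> k j kj; rewrite leNgt; apply/negP => hlt.
  have K0 : (0 < K)%N by have := ltn_ord j; lia.
  have qK : (K.-1 < K)%N by rewrite ltn_predL.
  pose q := Ordinal qK.
  have kq : (k < q)%N by have := ltn_ord j; rewrite /q /=; lia.
  have iq : forall i : 'I_K, (i <= q)%N by move=> i; have := ltn_ord i; rewrite /q /=; lia.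
  have hz2 : 0 < z k / 2 by rewrite divr_gt0.
  have hg : 0 < a k * (cc a z k - cc a z j) by rewrite mulr_gt0 // subr_gt0.
  have [e [e0 he1 he2]] := min2 _ _ hz2 hg.
  pose th' := fun l : 'I_K => if (k < l)%N then th l + e else th l.
  apply: (contra (zm z k q e) th').
    split; first by rewrite zm_sum.
    split.
      apply: zm_pos => //; first exact: ltW.
      by apply: (le_lt_trans he1); rewrite ltr_pdivrMr // ltr_pMr // ltr1n.
    split.
      by move=> l; rewrite /th'; case: ifP => _ //; apply: addr_gt0.
    move=> l i li; rewrite /th'; case: ifP => kl.
      have ki : (k < i)%N := leq_trans kl li.
      have := cc_zm_mid a z k q i e Ha (ltW e0) ki (iq i).
      have := Hc l i li.
      by move=> h1 h2; apply: le_trans h2; rewrite lerD2r.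
    case: (eqVneq i k) => [ik | ik].
      rewrite ik cc_zm_p //.
      have lj : (l <= j)%N by move: kl li; rewrite ik; lia.
      have h1 := Hc l j lj.
      have h2 : e / a k <= cc a z k - cc a z j by rewrite ler_pdivrMr // mulrC.
      lra.
    exact: le_trans (Hc l i li) (cc_zm_ge a z k q i e Ha kq (ltW e0) ik).
  apply: (mono_obj th' _ j).
    by move=> l; rewrite /th'; case: ifP => _ //; rewrite lerDl ltW.
  by rewrite /th' kj ltrDl.
have Tight : forall l, th l = cc a z l.
  move=> l; have [i [li e]] := P0 l.
  apply/le_anti/andP; split; first exact: Hc.
  rewrite e; move: li; rewrite leq_eqVlt => /orP [/eqP li | li].
    by rewrite (ord_inj li).
  exact: P1.
have P2 : forall k1 k2 : 'I_K, (k1 < k2)%N -> cc a z k1 < cc a z k2.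
  move=> k1 k2 k12; rewrite lt_neqAle P1 // andbT; apply/negP => /eqP Heq.
  pose mu := cc a z k1.
  pose P := fun i : 'I_K => cc a z i == mu.
  have Pk1 : P k1 by rewrite /P eqxx.
  have Pk2 : P k2 by rewrite /P /mu Heq.
  case: (arg_minnP (fun i : 'I_K => nat_of_ord i) Pk1) => p Pp pmin.
  case: (arg_maxnP (fun i : 'I_K => nat_of_ord i) Pk2) => q Pq qmax.
  have pq : (p < q)%N.
    by have := pmin k1 Pk1; have := qmax k2 Pk2; move: k12; lia.
  move/eqP: Pp => Pp; move/eqP: Pq => Pq.
  have mu0 : 0 < mu by rewrite /mu -Tight.
  have left : forall l : 'I_K, (l < p)%N -> 0 < mu - th l.
    move=> l lp; rewrite subr_gt0 Tight lt_neqAle -Pp P1 // andbT Pp.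
    apply/negP => /eqP hl; have := pmin l; rewrite /P hl eqxx => /(_ isT).
    by move: lp; lia.
  have right : forall i : 'I_K, (q < i)%N -> 0 < cc a z i - mu.
    move=> i qi; rewrite subr_gt0 lt_neqAle -Pq P1 // andbT Pq.
    apply/negP => /eqP hi; have := qmax i; rewrite /P -hi eqxx => /(_ isT).
    by move: qi; lia.
  have [gL [gL0 HgL]] := gap _ (fun l : 'I_K => (l < p)%N) _ left.
  have [gR [gR0 HgR]] := gap _ (fun i : 'I_K => (q < i)%N) _ right.
  pose al := (a p)^-1.
  pose be := 1 + (a q)^-1.
  have al0 : 0 < al by rewrite invr_gt0.
  have be0 : 0 < be by rewrite addr_gt0 // invr_gt0.
  have hz2 : 0 < z p / 2 by rewrite divr_gt0.
  have hL : 0 < gL * a p by rewrite mulr_gt0.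
  have hR : 0 < gR / be by rewrite divr_gt0.
  have [e1 [e10 h11 h12]] := min2 _ _ hz2 hL.
  have [e0 [e00 h01 h02]] := min2 _ _ e10 hR.
  have hw : w p * al < w q * be by exact: Hwq.
  have [e [e0' hee0 hale htr]] := trade n mu (w p) (w q) al be e0 n0 mu0 (Hw p) (Hw q) al0 be0 hw e00.
  have ep : e < z p.
    apply: (le_lt_trans hee0); apply: (le_lt_trans h01); apply: (le_lt_trans h11).
    by rewrite ltr_pdivrMr // ltr_pMr // ltr1n.
  have eL : al * e <= gL.
    have : e <= gL * a p := le_trans hee0 (le_trans h01 h12).
    by move=> h; rewrite /al mulrC ler_pdivrMr.
  have eR : be * e <= gR.
    have h : e <= gR / be := le_trans hee0 h02.
    move: h; rewrite (ler_pdivlMr _ _ be0) => h.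
    by rewrite mulrC.
  have alE : al * e = e / a p by rewrite /al mulrC.
  pose th' := fun l : 'I_K => if l == p then mu - al * e
                              else if l == q then mu + be * e else th l.
  have qp : q != p by rewrite -val_eqE /= gtn_eqF.
  apply: (contra (zm z p q e) th').
    split; first by rewrite zm_sum.
    split; first by apply: zm_pos => //; exact: ltW.
    split.
      move=> l; rewrite /th'; case: eqP => _; first by lra.
      case: eqP => _ //; have := mulr_gt0 be0 e0'; lra.
    move=> l i li; rewrite /th'; case: (eqVneq l p) => [lp | lp].
      case: (eqVneq i p) => [ip | ip].
        by rewrite ip cc_zm_p // Pp alE.
      have pi : (p < i)%N by move: li ip; rewrite lp -val_eqE /=; clear; lia.
      have := P1 p i pi; have := cc_zm_ge a z p q i e Ha pq (ltW e0') ip.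
      rewrite Pp; have := mulr_gt0 al0 e0'; lra.
    case: (eqVneq l q) => [lq | lq].
      case: (eqVneq i q) => [iq | iq].
        by rewrite iq cc_zm_q // Pq /be; lra.
      have qi : (q < i)%N by move: li iq; rewrite lq -val_eqE /=; clear; lia.
      have ip : i != p by rewrite -val_eqE /=; move: qi pq; clear; lia.
      have := HgR i qi; have := cc_zm_ge a z p q i e Ha pq (ltW e0') ip.
      lra.
    case: (eqVneq i p) => [ip | ip].
      have lp' : (l < p)%N by move: li lp; rewrite ip -val_eqE /=; clear; lia.
      rewrite ip cc_zm_p // Pp -alE.
      have := HgL l lp'; lra.
    exact: le_trans (Hc l i li) (cc_zm_ge a z p q i e Ha pq (ltW e0') ip).
  have split2 : forall f : 'I_K -> R, \sum_(i < K) f i =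
      f p + f q + \sum_(i < K | (i != p) && (i != q)) f i.
    move=> f; rewrite (bigD1 p) //= (bigD1 q) /=; last by rewrite qp.
    by rewrite addrA.
  rewrite /rowobj (split2 (fun i => w i * th' i ^- n)) (split2 (fun i => w i * th i ^- n)).
  have -> : \sum_(i < K | (i != p) && (i != q)) w i * th' i ^- n =
            \sum_(i < K | (i != p) && (i != q)) w i * th i ^- n.
    by apply: eq_bigr => i /andP [ip iq]; rewrite /th' (negbTE ip) (negbTE iq).
  rewrite /th' eqxx (negbTE qp) eqxx !Tight Pp Pq.
  move: htr; set S := \sum_(i < K | _) _.
  set A1 := w p * (mu - al * e) ^- n; set A2 := w q * (mu + be * e) ^- n.
  set B := w p * mu ^- n; set C := w q * mu ^- n.
  move=> ?; lra.
move=> k1 k2 k12; split; first by rewrite !Tight; exact: P2.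
have E : forall k, z k / a k = cc a z k + \sum_(l < K | (l < k)%N) z l.
  by move=> k; rewrite /cc subrK.
rewrite !E; apply: ltr_leD; first exact: P2.
rewrite [X in X <= _]big_mkcond [X in _ <= X]big_mkcond /=.
apply: ler_sum => l _; case: ifP => h1.
  by rewrite (ltn_trans h1 k12).
by case: ifP => _ //; exact: ltW.
Qed.


Theorem mainTheorem2 (R : realType) (Nt Nr M K : nat)
  (lam : 'I_Nr -> R) (q : 'I_M -> R) (gam Kc alpha : R) (d : 'I_K -> R)
  (Rt : 'I_M -> 'I_K -> R) (zeta theta : 'I_M -> 'I_K -> R) (m : 'I_M) :
  (1 <= M)%N -> (M <= minn Nt Nr)%N ->
  (forall i, 0 < lam i) ->
  (forall m', 0 < q m') ->
  0 < gam -> 0 < Kc -> 0 < alpha ->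
  (forall k, 0 < d k) ->
  (forall k1 k2 : 'I_K, (k1 <= k2)%N -> d k1 <= d k2) ->
  (forall k, 0 < Rt m k) ->
  (forall k, 0 < phi M lam (q m) gam Kc alpha (d k)) ->
  optimal (Nr - M + 1)
    (fun m' k => phi M lam (q m') gam Kc alpha (d k)) Rt zeta theta ->
  forall k1 k2 : 'I_K, (k1 < k2)%N ->
    theta m k1 < theta m k2 /\
    zeta m k1 / (2 `^ (Rt m k1) - 1) < zeta m k2 / (2 `^ (Rt m k2) - 1).
Proof.
move=> M1 MN Hlam Hq Hg HK Hal Hd0 Hdm HRt Hphi [Hfeas Hopt].
pose a := fun k => 2 `^ Rt m k - 1.
pose w := fun k => phi M lam (q m) gam Kc alpha (d k) * Rt m k.
have Ha0 : forall k, 0 < a k.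
  move=> k; rewrite /a pow2E subr_gt0.
  have h : 0 < Rt m k * ln (2 : R) by rewrite mulr_gt0 // ln_gt0 // ltr1n.
  by have := expR_gt1Dx (lt0r_neq0 h); lra.
have Hw0 : forall k, 0 < w k by move=> k; rewrite /w mulr_gt0.
have Hwq : forall p q : 'I_K, (p < q)%N -> w p / a p < w q * (1 + (a q)^-1).
  move=> p q' pq; rewrite /w /a.
  have hphi : phi M lam (q m) gam Kc alpha (d p) <= phi M lam (q m) gam Kc alpha (d q').
    by apply: phi_mono => //; [exact: ltW | exact: Hdm (ltnW pq)].
  have hr := ratio_lt _ _ (HRt p) (HRt q').
  have A0 : 0 <= Rt m p / (2 `^ Rt m p - 1).
    by rewrite divr_ge0 // ltW //; exact: (Ha0 p).
  rewrite -mulrA; apply: (le_lt_trans (ler_wpM2r A0 hphi)).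
  rewrite -mulrA ltr_pM2l //; exact: lt_le_trans (Hphi p) hphi.
have n0 : (0 < Nr - M + 1)%N by rewrite addn1.
case: (Hfeas) => [hs [hz [ht hc]]].
apply: (row_main (Nr - M + 1) a w (M%:R^-1) (zeta m) (theta m) n0 Ha0 Hw0 Hwq).
  by split; [exact: hs | split; [exact: hz | split; [exact: ht | exact: hc]]].
move=> z' th' [hs' [hz' [ht' hc']]].
pose zeta' := fun m' k => if m' == m then z' k else zeta m' k.
pose theta' := fun m' k => if m' == m then th' k else theta m' k.
have F : feasible Rt zeta' theta'.
  split.
    by move=> m'; rewrite /zeta'; case: eqP => _; [exact: hs' | exact: hs].
  split.
    by move=> m' k; rewrite /zeta'; case: eqP => _; [exact: hz' | exact: hz].
  split.
    by move=> m' k; rewrite /theta'; case: eqP => _; [exact: ht' | exact: ht].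
  move=> m' k i ki; rewrite /zeta' /theta'.
  have [e|ne] := eqVneq m' m.
    by subst m'; exact: hc'.
  exact: hc.
have := Hopt zeta' theta' F.
rewrite /objective (bigD1 m) //= [X in _ <= X](bigD1 m) //=.
have -> : \sum_(i < M | i != m) \sum_(k < K) phi M lam (q i) gam Kc alpha (d k) * Rt i k * theta' i k ^- (Nr - M + 1)
  = \sum_(i < M | i != m) \sum_(k < K) phi M lam (q i) gam Kc alpha (d k) * Rt i k * theta i k ^- (Nr - M + 1).
  by apply: eq_bigr => i /negbTE hi; rewrite /theta' hi.
rewrite lerD2r /theta' eqxx.
by [].
Qed.
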